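(* Let $n\ge1$ and $\alpha,\beta,u,v\in V_n$. There exists a valid rectangular pattern with tiles in $\mathcal T'_n$ whose right, top, left and bottom labels are respectively $\tau_n(\alpha)$, $\tau_n(\beta)$, $\tau_n(u)$ and $\tau_n(v)$ if and only if the Wang tile $(\alpha,\beta,u,v)$ (right $\alpha$, top $\beta$, left $u$, bottom $v$) belongs to $\mathcal T'_n$.
   Context: Write $\bar m=m+1$. $V_n=\{(v_0,v_1,v_2)\in\mathbb{Z}^3: 0\le v_0\le v_1\le 1,\ v_1\le v_2\le n+1\}$, elements written as words $v_0v_1v_2$. A Wang tile is $t=(a,b,c,d)$ with $\mathrm{RIGHT}(t)=a$, $\mathrm{TOP}(t)=b$, $\mathrm{LEFT}(t)=c$, $\mathrm{BOTTOM}(t)=d$; $\hat t=(b,a,d,c)$, $\hat S=\{\hat t:t\in S\}$. Define (as (right, top, left, bottom)): $W_n=\{(11(i+1),11(j+1),11i,11j):1\le i,j\le n\}$; $B'_n=\{(00(i+1),111,00i,11n):0\le i\le n\}$; $G_n=\{(01(i+1),111,00i,11(n+1)):0\le i\le n\}$; $Y_n=\{(01(i+1),112,01i,11(n+1)):1\le i\le n\}$; $A_n=\{(00(i+1),112,01i,11n):1\le i\le n\}$; $J'_n=\{((0,k,l),(0,r,s),(0,s,r+n),(0,l,k+n)):(k,l),(r,s)\in\{(0,0),(0,1),(1,1)\}\}$. $\mathcal T'_n=W_n\cup B'_n\cup G_n\cup Y_n\cup A_n\cup\hat B'_n\cup\hat G_n\cup\hat Y_n\cup\hat A_n\cup J'_n$.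 A rectangular pattern is valid if adjacent tiles agree on common edges; its bottom (top) labels are those of its bottom (top) row read left to right, its left (right) labels those of its left (right) column read bottom to top. $\tau_n:V_n\to V_n^*$ is $\tau_n(xyz)=(0,x-y+1,n)\cdot(11n)^{z-x-1}\cdot(11\bar n)^{n+1-z}$ if $x\ne z$, and $\tau_n(xyz)=(0,x-y+1,n+1)\cdot(11\bar n)^{n-z}$ if $x=z$. *)

(* Defs.v *)
From mathcomp Require Import all_boot.
Set Implicit Arguments. Unset Strict Implicit. Unset Printing Implicit Defensive.

Definition label := (nat * nat * nat)%type.
Definition lab (a b c : nat) : label := (a, b, c).

Definition inV (n : nat) (v : label) : Prop :=
  let: (v0, v1, v2) := v in v0 <= v1 /\ v1 <= 1 /\ v1 <= v2 /\ v2 <= n.+1.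

Definition tile := (label * label * label * label)%type.
Definition mkt (a b c d : label) : tile := (a, b, c, d).
Definition RIGHT (t : tile) : label := let: (a, _, _, _) := t in a.
Definition TOP (t : tile) : label := let: (_, b, _, _) := t in b.
Definition LEFT (t : tile) : label := let: (_, _, c, _) := t in c.
Definition BOTTOM (t : tile) : label := let: (_, _, _, d) := t in d.
Definition hat (t : tile) : tile := let: (a, b, c, d) := t in (b, a, d, c).

Definition inW (n : nat) (t : tile) : Prop :=
  exists i j, [/\ 1 <= i <= n, 1 <= j <= n &
    t = mkt (lab 1 1 i.+1) (lab 1 1 j.+1) (lab 1 1 i) (lab 1 1 j)].
Definition inB' (n : nat) (t : tile) : Prop :=
  exists i, i <= n /\ t = mkt (lab 0 0 i.+1) (lab 1 1 1) (lab 0 0 i) (lab 1 1 n).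
Definition inG (n : nat) (t : tile) : Prop :=
  exists i, i <= n /\ t = mkt (lab 0 1 i.+1) (lab 1 1 1) (lab 0 0 i) (lab 1 1 n.+1).
Definition inY (n : nat) (t : tile) : Prop :=
  exists i, 1 <= i <= n /\ t = mkt (lab 0 1 i.+1) (lab 1 1 2) (lab 0 1 i) (lab 1 1 n.+1).
Definition inA (n : nat) (t : tile) : Prop :=
  exists i, 1 <= i <= n /\ t = mkt (lab 0 0 i.+1) (lab 1 1 2) (lab 0 1 i) (lab 1 1 n).

Definition okpair (k l : nat) : Prop := (k, l) = (0, 0) \/ (k, l) = (0, 1) \/ (k, l) = (1, 1).
Definition inJ' (n : nat) (t : tile) : Prop :=
  exists k l r s, [/\ okpair k l, okpair r s &
    t = mkt (lab 0 k l) (lab 0 r s) (lab 0 s (r + n)) (lab 0 l (k + n))].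

Definition inhat (S : tile -> Prop) (t : tile) : Prop := exists s, S s /\ t = hat s.

Definition inT' (n : nat) (t : tile) : Prop :=
  inW n t \/ inB' n t \/ inG n t \/ inY n t \/ inA n t \/
  inhat (inB' n) t \/ inhat (inG n) t \/ inhat (inY n) t \/ inhat (inA n) t \/
  inJ' n t.

Definition tau (n : nat) (v : label) : seq label :=
  let: (x, y, z) := v in
  if x != z then
    lab 0 (x + 1 - y) n :: nseq (z - x - 1) (lab 1 1 n) ++ nseq (n + 1 - z) (lab 1 1 n.+1)
  else
    lab 0 (x + 1 - y) n.+1 :: nseq (n - z) (lab 1 1 n.+1).

(* A rectangular pattern of width w and height h: f i j is the tile in
   column i (0 <= i < w, left to right) and row j (0 <= j < h, bottom to top). *)
Definition valid_pattern (T : tile -> Prop) (w h : nat) (f : nat -> nat -> tile) : Prop :=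
  [/\ forall i j, i < w -> j < h -> T (f i j),
      forall i j, i.+1 < w -> j < h -> RIGHT (f i j) = LEFT (f i.+1 j) &
      forall i j, i < w -> j.+1 < h -> TOP (f i j) = BOTTOM (f i j.+1)].

Definition bottom_labels (w h : nat) (f : nat -> nat -> tile) : seq label :=
  [seq BOTTOM (f i 0) | i <- iota 0 w].
Definition top_labels (w h : nat) (f : nat -> nat -> tile) : seq label :=
  [seq TOP (f i h.-1) | i <- iota 0 w].
Definition left_labels (w h : nat) (f : nat -> nat -> tile) : seq label :=
  [seq LEFT (f 0 j) | j <- iota 0 h].
Definition right_labels (w h : nat) (f : nat -> nat -> tile) : seq label :=
  [seq RIGHT (f w.-1 j) | j <- iota 0 h].

(* Main.v *)
Require Import Defs.
From mathcomp Require Import all_boot.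
From mathcomp Require Import zify.

Definition taun (n : nat) (v : label) (j : nat) : label :=
  let: (x, y, z) := v in
  if j == 0 then lab 0 (x + 1 - y) (n + (z <= x)) else lab 1 1 (n + (z <= j + x)).

Lemma lab_eq a b c a' b' c' : a = a' -> b = b' -> c = c' -> lab a b c = lab a' b' c'.
Proof. by move=> -> -> ->. Qed.

Lemma lab_inj a b c a' b' c' : lab a b c = lab a' b' c' -> [/\ a = a', b = b' & c = c'].
Proof. by case=> -> -> ->. Qed.
Arguments lab_inj {a b c a' b' c'}.

Lemma size_tau n v : 0 < n -> inV n v -> size (tau n v) = n.+1 - v.1.1.
Proof.
move=> n0; case: v => [[x y] z] /= [? [? [? ?]]]; rewrite /tau.
case: eqP => [e|ne] /=; rewrite ?size_cat !size_nseq; lia.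
Qed.

Lemma nth_tau n v j d : 0 < n -> inV n v -> j < n.+1 - v.1.1 -> nth d (tau n v) j = taun n v j.
Proof.
move=> n0; case: v => [[x y] z] /= [? [? [? ?]]] hj; rewrite /tau /taun.
case: j hj => [|j] hj /=.
- case: eqP => [e|ne] /=; apply: lab_eq => //; case: leqP; lia.
- case: eqP => [e|ne] /=.
  + rewrite nth_nseq; case: ifP => h; last lia.
    apply: lab_eq => //; case: leqP; lia.
  + rewrite nth_cat size_nseq; case: ifP => h.
    * rewrite nth_nseq h; apply: lab_eq => //; case: leqP; lia.
    * rewrite nth_nseq; case: ifP => h2; last lia.
      apply: lab_eq => //; case: leqP; lia.
Qed.

Lemma labels_eq (F : nat -> label) h s :
  size s = h -> (forall j, j < h -> F j = nth (lab 0 0 0) s j) ->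
  [seq F j | j <- iota 0 h] = s.
Proof.
move=> hs hF; apply: (@eq_from_nth _ (lab 0 0 0)); rewrite size_map size_iota //.
move=> j hj; rewrite (nth_map 0) ?size_iota // nth_iota // add0n; exact: hF.
Qed.

Lemma labels_nth (F : nat -> label) h s :
  [seq F j | j <- iota 0 h] = s -> size s = h /\ (forall j, j < h -> F j = nth (lab 0 0 0) s j).
Proof.
move=> <-; rewrite size_map size_iota; split=> // j hj.
by rewrite (nth_map 0) ?size_iota // nth_iota.
Qed.

Definition Hl (n : nat) (u v : label) (i j : nat) : label :=
  let: (u0, u1, u2) := u in let: (v0, v1, v2) := v in
  if i == 0 then taun n u j else
  if j == 0 then lab 0 (v2 <= i.-1 + v0) (v0 + 1 - v1 + i.-1)
  else lab 1 1 (i + (u2 <= j.-1 + u0)).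
Definition Vl (n : nat) (u v : label) (i j : nat) : label :=
  let: (u0, u1, u2) := u in let: (v0, v1, v2) := v in
  if j == 0 then taun n v i else
  if i == 0 then lab 0 (u2 <= j.-1 + u0) (u0 + 1 - u1 + j.-1)
  else lab 1 1 (j + (v2 <= i.-1 + v0)).
Definition gp n u v i j : tile :=
  mkt (Hl n u v i.+1 j) (Vl n u v i j.+1) (Hl n u v i j) (Vl n u v i j).

Definition Wok (n : nat) (u v : label) : Prop :=
  let: (u0, u1, u2) := u in let: (v0, v1, v2) := v in
  forall i j, 0 < i -> i < n.+1 - v0 -> 0 < j -> j < n.+1 - u0 ->
    i + (u2 <= j.-1 + u0) <= n /\ j + (v2 <= i.-1 + v0) <= n.

Ltac tsolve := rewrite /mkt /lab /hat /=;
  repeat match goal with |- (_, _) = (_, _) => f_equal end; lia.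

Lemma okpairP k l : k <= 1 -> l <= 1 -> (k = 1 -> l = 1) -> okpair k l.
Proof.
rewrite /okpair; case: k => [|[|k]] //; case: l => [|[|l]] //; try lia; auto.
Qed.

Lemma g_in n u v i j : 0 < n -> inV n u -> inV n v -> Wok n u v ->
  i < n.+1 - v.1.1 -> j < n.+1 - u.1.1 -> inT' n (gp n u v i j).
Proof.
case: u => [[u0 u1] u2]; case: v => [[v0 v1] v2].
move=> n0 /= [? [? [? ?]]] [? [? [? ?]]] W hi hj.
rewrite /gp /Hl /Vl /taun.
case: i hi => [|i] hi; case: j hj => [|j] hj /=.
- do 9 right. exists (v2 <= v0), (v0 + 1 - v1), (u2 <= u0), (u0 + 1 - u1).
  split; [apply: okpairP; lia | apply: okpairP; lia | tsolve].
- have [h1|h1] := leqP u2 (j + u0); have [h2|h2] := leqP u2 (j.+1 + u0); try lia.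
  + do 7 right; left; eexists; split; [exists (u0 + 1 - u1 + j); split; [lia|reflexivity]|tsolve].
  + do 6 right; left; eexists; split; [exists (u0 + 1 - u1 + j); split; [lia|reflexivity]|tsolve].
  + do 5 right; left; eexists; split; [exists (u0 + 1 - u1 + j); split; [lia|reflexivity]|tsolve].
- have [h1|h1] := leqP v2 (i + v0); have [h2|h2] := leqP v2 (i.+1 + v0); try lia.
  + do 3 right; left; exists (v0 + 1 - v1 + i); split; [lia|tsolve].
  + do 2 right; left; exists (v0 + 1 - v1 + i); split; [lia|tsolve].
  + right; left; exists (v0 + 1 - v1 + i); split; [lia|tsolve].
- have := W i.+1 j.+1; rewrite /=; move=> /(_ erefl) Wij.
  left; exists (i.+1 + (u2 <= j + u0)), (j.+1 + (v2 <= i + v0)).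
  have {}Wij := Wij ltac:(lia) erefl ltac:(lia).
  split; [lia|lia|tsolve].
Qed.

Ltac destr_all :=
  repeat match goal with
  | H : _ \/ _ |- _ => case: H => H
  | H : exists _, _ |- _ => let x := fresh "x" in let H2 := fresh "H" in case: H => x H2
  | H : _ /\ _ |- _ => let H1 := fresh "H" in let H2 := fresh "H" in case: H => H1 H2
  | H : and3 _ _ _ |- _ =>
     let H1 := fresh "H" in let H2 := fresh "H" in let H3 := fresh "H" in case: H => H1 H2 H3
  end.

Lemma det n u v i j t : 0 < n -> inV n u -> inV n v -> inT' n t ->
  LEFT t = Hl n u v i j -> BOTTOM t = Vl n u v i j ->
  RIGHT t = Hl n u v i.+1 j /\ TOP t = Vl n u v i j.+1.
Proof.
case: u => [[u0 u1] u2]; case: v => [[v0 v1] v2].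
move=> n0 /= [? [? [? ?]]] [? [? [? ?]]] T.
rewrite /Hl /Vl /taun.
move: T; rewrite /inT' /inW /inB' /inG /inY /inA /inhat /inJ' => T.
destr_all; subst;
rewrite /LEFT /BOTTOM /RIGHT /TOP /mkt /hat /=;
case: i => [|i]; case: j => [|j] /= => hL hB;
have [? ? ?] := lab_inj hL; have [? ? ?] := lab_inj hB;
split; apply: lab_eq; lia.
Qed.

Lemma Hl_pos n u v i j : 0 < i -> Hl n u v i j =
  if j == 0 then lab 0 (v.2 <= i.-1 + v.1.1) (v.1.1 + 1 - v.1.2 + i.-1)
  else lab 1 1 (i + (u.2 <= j.-1 + u.1.1)).
Proof. by case: u => [[u0 u1] u2]; case: v => [[v0 v1] v2]; case: i. Qed.

Lemma Vl_pos n u v i j : 0 < j -> Vl n u v i j =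
  if i == 0 then lab 0 (u.2 <= j.-1 + u.1.1) (u.1.1 + 1 - u.1.2 + j.-1)
  else lab 1 1 (j + (v.2 <= i.-1 + v.1.1)).
Proof. by case: u => [[u0 u1] u2]; case: v => [[v0 v1] v2]; case: j. Qed.

Lemma good n a b u v : 0 < n -> inT' n (mkt a b u v) ->
  [/\ Wok n u v, a.1.1 = u.1.1, b.1.1 = v.1.1,
      forall j, j < n.+1 - u.1.1 -> Hl n u v (n.+1 - v.1.1) j = taun n a j &
      forall i, i < n.+1 - v.1.1 -> Vl n u v i (n.+1 - u.1.1) = taun n b i].
Proof.
move=> n0 T.
move: T; rewrite /inT' /inW /inB' /inG /inY /inA /inhat /inJ' /okpair => T.
destr_all;
repeat match goal with H : (_, _) = (_, _) |- _ => move/pair_equal_spec: H => [? ?] end; subst;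
match goal with H : mkt _ _ _ _ = _ |- _ => move: H; rewrite /mkt /hat => - [? ? ? ?]; subst end;
(split; [ rewrite /Wok /lab /= => i j *; lia | by [] | by []
        | move=> j hj; rewrite Hl_pos /=; [|lia]; case: j hj => [|j] hj; rewrite /lab /= in hj *; repeat match goal with |- (_, _) = (_, _) => f_equal end; lia
        | move=> i hi; rewrite Vl_pos /=; [|lia]; case: i hi => [|i] hi; rewrite /lab /= in hi *; repeat match goal with |- (_, _) = (_, _) => f_equal end; lia ]).
Qed.

Lemma eq0F x : 0 < x -> (x == 0) = false.
Proof. by case: x. Qed.
Arguments eq0F {x}.

Lemma fwd_arith n a b u v : 0 < n -> inV n a -> inV n b -> inV n u -> inV n v ->
  a.1.1 = u.1.1 -> b.1.1 = v.1.1 ->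
  (forall j, j < n.+1 - u.1.1 -> Hl n u v (n.+1 - v.1.1) j = taun n a j) ->
  (forall i, i < n.+1 - v.1.1 -> Vl n u v i (n.+1 - u.1.1) = taun n b i) ->
  exists a' b', inT' n (mkt a' b' u v).
Proof.
case: a => [[a0 a1] a2]; case: b => [[b0 b1] b2].
case: u => [[u0 u1] u2]; case: v => [[v0 v1] v2].
move=> n0 Va Vb Vu Vv ea eb HR HT.
move: Va Vb Vu Vv ea eb => /= [ha1 [ha2 [ha3 ha4]]] [hb1 [hb2 [hb3 hb4]]] [? [? [? ?]]] [? [? [? ?]]] ea eb.
subst a0 b0.
have R0 := HR 0 ltac:(simpl; lia); have T0 := HT 0 ltac:(simpl; lia).
rewrite Hl_pos /= in R0; [|simpl; lia]. rewrite Vl_pos /= in T0; [|simpl; lia].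
rewrite /taun /= in R0 T0.
have [_ r01 r02] := lab_inj R0; have [_ t01 t02] := lab_inj T0.
clear R0 T0.
have hu0 : u0 = 0 \/ u0 = 1 by lia.
have hv0 : v0 = 0 \/ v0 = 1 by lia.
case: hu0 => ?; case: hv0 => ?; subst u0 v0.
-
  have Rn := HR n ltac:(simpl; lia). have Tn := HT n ltac:(simpl; lia).
  rewrite Hl_pos /= in Rn; [|simpl; lia]. rewrite Vl_pos /= in Tn; [|simpl; lia].
  rewrite /taun /= !(eq0F n0) in Rn Tn.
  have [_ _ rn3] := lab_inj Rn; have [_ _ tn3] := lab_inj Tn.
  have hu2 : n <= u2 by clear -rn3 n0; lia.
  have hv2 : n <= v2 by clear -tn3 n0; lia.
  have hu1 : u1 = 0 -> u2 <= n by clear -t01 t02 hb3; lia.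
  have hv1 : v1 = 0 -> v2 <= n by clear -r01 r02 ha3; lia.
  clear Rn Tn rn3 tn3 r01 r02 t01 t02 HR HT.
  exists (lab 0 (v2 - n) v1), (lab 0 (u2 - n) u1).
  do 9 right. exists (v2 - n), v1, (u2 - n), u1.
  split; [apply: okpairP; lia | apply: okpairP; lia | tsolve].
- have hu2 : u2 <= n by clear -t01 hb2 n0; lia.
  have hv2 : n <= v2.
    have [n1|n2] : n = 1 \/ 1 < n by lia.
    + lia.
    have Tn := HT n.-1 ltac:(simpl; lia).
    rewrite Vl_pos /= in Tn; [|simpl; lia].
    rewrite /taun /= !(eq0F (_ : 0 < n.-1)) in Tn; [|lia].
    have [_ _ tn3] := lab_inj Tn.
    clear -tn3 n2; lia.
  clear r01 r02 t01 t02 HR HT.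
  have hv : v2 = n \/ v2 = n.+1 by lia.
  have hu : u1 = 0 \/ u1 = 1 by lia.
  case: hv => ?; case: hu => ?; subst v2 u1.
  + exists (lab 0 0 u2.+1), (lab 1 1 1); right; left; exists u2; split; [lia|tsolve].
  + exists (lab 0 0 u2.+1), (lab 1 1 2); do 4 right; left; exists u2; split; [lia|tsolve].
  + exists (lab 0 1 u2.+1), (lab 1 1 1); do 2 right; left; exists u2; split; [lia|tsolve].
  + exists (lab 0 1 u2.+1), (lab 1 1 2); do 3 right; left; exists u2; split; [lia|tsolve].
- have hv2 : v2 <= n by clear -r01 ha2 n0; lia.
  have hu2 : n <= u2.
    have [n1|n2] : n = 1 \/ 1 < n by lia.
    + lia.
    have Rn := HR n.-1 ltac:(simpl; lia).
    rewrite Hl_pos /= in Rn; [|simpl; lia].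
    rewrite /taun /= !(eq0F (_ : 0 < n.-1)) in Rn; [|lia].
    have [_ _ rn3] := lab_inj Rn.
    clear -rn3 n2; lia.
  clear r01 r02 t01 t02 HR HT.
  have hu : u2 = n \/ u2 = n.+1 by lia.
  have hv : v1 = 0 \/ v1 = 1 by lia.
  case: hu => ?; case: hv => ?; subst u2 v1.
  + exists (lab 1 1 1), (lab 0 0 v2.+1); do 5 right; left; eexists; split; [exists v2; split; [lia|reflexivity]|tsolve].
  + exists (lab 1 1 2), (lab 0 0 v2.+1); do 8 right; left; eexists; split; [exists v2; split; [lia|reflexivity]|tsolve].
  + exists (lab 1 1 1), (lab 0 1 v2.+1); do 6 right; left; eexists; split; [exists v2; split; [lia|reflexivity]|tsolve].
  + exists (lab 1 1 2), (lab 0 1 v2.+1); do 7 right; left; eexists; split; [exists v2; split; [lia|reflexivity]|tsolve].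
- have hv2 : v2 <= n by clear -r01 ha2 n0; lia.
  have hu2 : u2 <= n by clear -t01 hb2 n0; lia.
  clear r01 r02 t01 t02 HR HT.
  exists (lab 1 1 u2.+1), (lab 1 1 v2.+1). left; exists u2, v2; split; [lia|lia|tsolve].
Qed.

Lemma Hl0 n u v j : Hl n u v 0 j = taun n u j.
Proof. by case: u => [[u0 u1] u2]; case: v => [[v0 v1] v2]. Qed.
Lemma Vl0 n u v i : Vl n u v i 0 = taun n v i.
Proof. by case: u => [[u0 u1] u2]; case: v => [[v0 v1] v2]. Qed.

Lemma inV1 n v : inV n v -> v.1.1 <= 1.
Proof. case: v => [[x y] z] /=; lia. Qed.

Lemma taun_inj n a b : 0 < n -> inV n a -> inV n b -> a.1.1 = b.1.1 ->
  (forall j, j < n.+1 - a.1.1 -> taun n a j = taun n b j) -> a = b.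
Proof.
case: a => [[a0 a1] a2]; case: b => [[b0 b1] b2].
move=> n0 Va Vb e H; move: Va Vb e => /= [? [? [? ?]]] [? [? [? ?]]] e; subst b0.
have key : forall c1 c2 x y, a0 <= x -> x < y -> y <= n.+1 ->
    (forall j, j < n.+1 - a0 -> taun n (a0, c1, x) j = taun n (a0, c2, y) j) -> False.
  move=> c1 c2 x y hx hxy hy Hj.
  have := Hj (x - a0) ltac:(lia).
  rewrite /taun /=; case: eqP => ex /= Ej; have [_ _ E3] := lab_inj Ej; lia.
have := H 0 ltac:(simpl; lia); rewrite /taun /= => E0; have [_ E2 _] := lab_inj E0.
have e1 : a1 = b1 by lia.
subst b1.
case: (ltngtP a2 b2) => h.
- exfalso; apply: (key a1 a1 a2 b2); try lia; exact: H.
- exfalso; apply: (key a1 a1 b2 a2); try lia; move=> j hj; symmetry; exact: H.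
- by rewrite h.
Qed.

Lemma T_inV n t : inT' n t -> inV n (RIGHT t) /\ inV n (TOP t).
Proof.
rewrite /inT' /inW /inB' /inG /inY /inA /inhat /inJ' /okpair => T.
destr_all;
repeat match goal with H : (_, _) = (_, _) |- _ => move/pair_equal_spec: H => [? ?] end; subst;
rewrite /= ; lia.
Qed.

Arguments inV1 {n v}.
Arguments T_inV {n t}.
Arguments det {n u v i j t}.
Arguments good {n a b u v}.
Arguments fwd_arith {n a b u v}.
Arguments labels_nth {F h s}.
Arguments labels_eq {F h s}.
Arguments taun_inj {n a b}.

Theorem proposition5p9 (n : nat) (alpha beta u v : label) :
  1 <= n -> inV n alpha -> inV n beta -> inV n u -> inV n v ->
  ((exists (w h : nat) (f : nat -> nat -> tile),
      0 < w /\ 0 < h /\ valid_pattern (inT' n) w h f /\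
      right_labels w h f = tau n alpha /\
      top_labels w h f = tau n beta /\
      left_labels w h f = tau n u /\
      bottom_labels w h f = tau n v)
   <-> inT' n (mkt alpha beta u v)).
Proof.
move=> n0 Va Vb Vu Vv.
have ua := inV1 Va; have ub := inV1 Vb; have uu := inV1 Vu; have uv := inV1 Vv.
split.
- case=> w [h [f [w0 [h0 [[Tf Rf Uf] [Re [Te [Le Be]]]]]]]].
  have [sL hL] := labels_nth Le; have [sB hB] := labels_nth Be.
  have [sR hR] := labels_nth Re; have [sT hT] := labels_nth Te.
  rewrite size_tau // in sL; rewrite size_tau // in sB; rewrite size_tau // in sR; rewrite size_tau // in sT.
  have ea : alpha.1.1 = u.1.1 by lia.
  have eb : beta.1.1 = v.1.1 by lia.
  have Lf : forall j, j < h -> LEFT (f 0 j) = Hl n u v 0 j.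
    move=> j hj; rewrite hL // Hl0 nth_tau //; lia.
  have Bf : forall i, i < w -> BOTTOM (f i 0) = Vl n u v i 0.
    move=> i hi; rewrite hB // Vl0 nth_tau //; lia.
  have Step : forall i j, i < w -> j < h ->
      LEFT (f i j) = Hl n u v i j /\ BOTTOM (f i j) = Vl n u v i j ->
      RIGHT (f i j) = Hl n u v i.+1 j /\ TOP (f i j) = Vl n u v i j.+1.
    move=> i j hi hj [e1 e2]; exact: det n0 Vu Vv (Tf i j hi hj) e1 e2.
  have P : forall j, j < h -> forall i, i < w ->
      LEFT (f i j) = Hl n u v i j /\ BOTTOM (f i j) = Vl n u v i j.
    elim=> [|j IHj] hj; elim=> [|i IHi] hi.
    + by split; [apply: Lf | apply: Bf].
    + split; last by apply: Bf.
      rewrite -Rf //; exact: (Step i 0 (ltnW hi) hj (IHi (ltnW hi))).1.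
    + split; first by apply: Lf.
      rewrite -Uf //; exact: (Step 0 j hi (ltnW hj) (IHj (ltnW hj) 0 hi)).2.
    + split.
      * rewrite -Rf //; exact: (Step i j.+1 (ltnW hi) hj (IHi (ltnW hi))).1.
      * rewrite -Uf //; exact: (Step i.+1 j hi (ltnW hj) (IHj (ltnW hj) i.+1 hi)).2.
  have HR : forall j, j < n.+1 - u.1.1 -> Hl n u v (n.+1 - v.1.1) j = taun n alpha j.
    move=> j hj.
    have hw : w.-1 < w by lia.
    rewrite -(nth_tau _ _ _ (lab 0 0 0)) //; last lia.
    rewrite -hR; last lia.
    rewrite (Step _ _ hw _ (P j _ _ hw)).1 ?prednK //; try lia.
    by have -> : w = n.+1 - v.1.1 by lia.
  have HT : forall i, i < n.+1 - v.1.1 -> Vl n u v i (n.+1 - u.1.1) = taun n beta i.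
    move=> i hi.
    have hh : h.-1 < h by lia.
    rewrite -(nth_tau _ _ _ (lab 0 0 0)) //; last lia.
    rewrite -hT; last lia.
    rewrite (Step _ _ _ hh (P _ hh i _)).2 ?prednK //; try lia.
    by have -> : h = n.+1 - u.1.1 by lia.
  have [a' [b' T']] := fwd_arith n0 Va Vb Vu Vv ea eb HR HT.
  have [_ ea' eb' HR' HT'] := good n0 T'.
  have [Va' Vb'] := T_inV T'.
  rewrite /= in Va' Vb'.
  have -> : alpha = a'.
    apply: (taun_inj n0 Va Va'); first by rewrite ea ea'.
    move=> j hj; rewrite -HR; last lia. rewrite HR' //; lia.
  have -> : beta = b'.
    apply: (taun_inj n0 Vb Vb'); first by rewrite eb eb'.
    move=> i hi; rewrite -HT; last lia. rewrite HT' //; lia.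
  exact: T'.
- move=> T.
  have [Wk ea eb HR HT] := good n0 T.
  exists (n.+1 - v.1.1), (n.+1 - u.1.1), (gp n u v).
  split; first lia. split; first lia. split.
    split.
    + move=> i j hi hj; exact: g_in.
    + by [].
    + by [].
  split; last split; last split.
  + apply: labels_eq; first by rewrite size_tau //; lia.
    move=> j hj; rewrite /gp /= prednK; last lia.
    rewrite HR // nth_tau //; lia.
  + apply: labels_eq; first by rewrite size_tau //; lia.
    move=> i hi; rewrite /gp /= prednK; last lia.
    rewrite HT // nth_tau //; lia.
  + apply: labels_eq; first by rewrite size_tau //; lia.
    move=> j hj; rewrite /gp /= Hl0 nth_tau //; lia.
  + apply: labels_eq; first by rewrite size_tau //; lia.
    move=> i hi; rewrite /gp /= Vl0 nth_tau //; lia.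
Qed.
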